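(* Let $(\mathbb{F}_i)_{i\ge0}$ be a filtration on $\mathcal{E}$ with ranges $\mathcal{F}_i$. (1) If $(P_i)_{i\ge0}$ is a stopping time, then there is $\tau\in\mathcal{E}^s$ with $\tau(K)\subseteq\{1,2,\dots\}\cup\{\infty\}$ such that $\{\tau=n\}$ is clopen and $\mathbf{1}_{\{\tau=n\}}\in\mathcal{F}_n$ for every $n\ge1$, and $P_nf=\mathbf{1}_{\{\tau\le n\}}f$ for all $f\in\mathcal{E}$ and $n\ge0$. (2) Conversely, if $\tau\in\mathcal{E}^s$ satisfies $\tau(K)\subseteq\{1,2,\dots\}\cup\{\infty\}$ and $\mathbf{1}_{\{\tau=n\}}\in\mathcal{F}_n$ for all $n\ge1$, then the operators $P_0=0$ and $P_nf=\mathbf{1}_{\{\tau\le n\}}f$ ($f\in\mathcal{E}$, $n\ge1$) form a stopping time.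
   Context: Let $\mathcal{E}$ be an order complete vector lattice with a weak order unit $E$, $K$ its Stone space (extremally disconnected compact Hausdorff), and $C^\infty(K)$ the vector lattice and f-algebra of continuous functions $K\to[-\infty,\infty]$ finite off a nowhere dense set (identified when equal off a nowhere dense set; operations pointwise), the universal completion of $\mathcal{E}$. Fix a Maeda–Ogasawara representation of $\mathcal{E}$ as an order dense ideal of $C^\infty(K)$ with $E$ corresponding to $\mathbf{1}$; band projections on $\mathcal{E}$ are exactly multiplications by $\mathbf{1}_W$ for clopen $W\subseteq K$. The sup-completion is $\mathcal{E}^s=\{f\in C(K,[-\infty,\infty]): f\ge g\text{ for some } g\in\mathcal{E}\}$. A conditional expectation on $\mathcal{E}$ is an order continuous, strictly positive linear projection $\mathbb{F}:\mathcal{E}\to\mathcal{E}$ whose range is an order complete vector sublattice of $\mathcal{E}$ and with $\mathbb{F}E=E$. A filtration is a family $(\mathbb{F}_i)_{i\ge0}$ of conditional expectations with $\mathbb{F}_s=\mathbb{F}_s\mathbb{F}_t=\mathbb{F}_t\mathbb{F}_s$ for $s\le t$; $\mathcal{F}_i$ is the range of $\mathbb{F}_i$. A stopping time (for this filtration) is an increasing sequence $(P_i)_{i\ge0}$ of band projections on $\mathcal{E}$ with $P_0=0$ and $\mathbb{F}_jP_i=P_i\mathbb{F}_j$ whenever $i\le j$. *)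

(* Defs.v *)
From HB Require Import structures.
From mathcomp Require Import all_boot all_order all_algebra.
From mathcomp Require Import all_classical all_reals all_analysis.
Set Implicit Arguments. Unset Strict Implicit. Unset Printing Implicit Defensive.
Import Order.TTheory GRing.Theory Num.Theory.
Local Open Scope classical_set_scope.
Local Open Scope ring_scope.
Local Open Scope ereal_scope.

(* Functions K -> [-oo, +oo]; C^oo(K) is modelled by its continuous
   representatives (two continuous functions equal off a nowhere dense set
   are equal, so the identification is trivial). *)

Definition nowhere_dense {T : topologicalType} (A : set T) :=
  interior (closure A) = set0.

Definition extremally_disconnected (T : topologicalType) :=
  forall U : set T, open U -> open (closure U).

Definition stone_space (K : topologicalType) :=
  [/\ compact [set: K], hausdorff_space K & extremally_disconnected K].

Definition Cinf (R : realType) (K : topologicalType) : set (K -> \bar R) :=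
  [set f | continuous f /\ nowhere_dense [set x | f x \isn't a fin_num]].

(* h = a f + b g in C^oo(K): pointwise wherever f and g are finite
   (this determines the continuous h uniquely). *)
Definition is_lincomb (R : realType) (K : Type) (a : R) (f : K -> \bar R)
  (b : R) (g : K -> \bar R) (h : K -> \bar R) :=
  forall x, f x \is a fin_num -> g x \is a fin_num ->
    h x = a%:E * f x + b%:E * g x.

Definition fle (R : realType) (K : Type) (f g : K -> \bar R) :=
  forall x, f x <= g x.

Definition fzero (R : realType) (K : Type) : K -> \bar R := fun=> 0.
Definition fone (R : realType) (K : Type) : K -> \bar R := fun=> 1.

Definition order_dense_ideal (R : realType) (K : topologicalType)
  (E : set (K -> \bar R)) :=
  [/\ E `<=` @Cinf R K,
      (forall f g a b, E f -> E g -> exists2 h, E h & is_lincomb a f b g h),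
      (forall f g, E f -> @Cinf R K g -> (forall x, `|g x| <= `|f x|) -> E g),
      (forall g, @Cinf R K g -> fle (@fzero R K) g -> g <> @fzero R K ->
          exists2 f, E f & [/\ fle (@fzero R K) f, fle f g & f <> @fzero R K])
    & E (@fone R K)].

Definition is_inf (R : realType) (K : Type) (S D : set (K -> \bar R))
  (g : K -> \bar R) :=
  [/\ S g, (forall d, D d -> fle g d)
     & (forall h, S h -> (forall d, D d -> fle h d) -> fle h g)].

Definition is_sup (R : realType) (K : Type) (S D : set (K -> \bar R))
  (g : K -> \bar R) :=
  [/\ S g, (forall d, D d -> fle d g)
     & (forall h, S h -> (forall d, D d -> fle d h) -> fle g h)].

Definition order_continuous (R : realType) (K : Type) (E : set (K -> \bar R))
  (F : (K -> \bar R) -> (K -> \bar R)) :=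
  forall D : set (K -> \bar R), D `<=` E -> D !=set0 ->
    (forall d1 d2, D d1 -> D d2 -> exists2 d3, D d3 & fle d3 d1 /\ fle d3 d2) ->
    is_inf E D (@fzero R K) -> is_inf E (F @` D) (@fzero R K).

Definition linear_on (R : realType) (K : Type) (E : set (K -> \bar R))
  (F : (K -> \bar R) -> (K -> \bar R)) :=
  forall a b f g h, E f -> E g -> E h -> is_lincomb a f b g h ->
    is_lincomb a (F f) b (F g) (F h).

Definition strictly_positive (R : realType) (K : Type) (E : set (K -> \bar R))
  (F : (K -> \bar R) -> (K -> \bar R)) :=
  forall f, E f -> fle (@fzero R K) f -> f <> @fzero R K ->
    fle (@fzero R K) (F f) /\ F f <> @fzero R K.

Definition order_complete_sublattice (R : realType) (K : Type)
  (S : set (K -> \bar R)) :=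
  [/\ (forall f g a b, S f -> S g -> exists2 h, S h & is_lincomb a f b g h),
      (forall f g, S f -> S g -> S (fun x => maxe (f x) (g x)))
    & (forall A, A `<=` S -> A !=set0 ->
         (exists2 u, S u & forall d, A d -> fle d u) ->
         exists s, is_sup S A s)].

Definition cond_exp (R : realType) (K : Type) (E : set (K -> \bar R))
  (F : (K -> \bar R) -> (K -> \bar R)) :=
  [/\ (forall f, E f -> E (F f)),
      linear_on E F,
      (forall f, E f -> F (F f) = F f)
    & F (@fone R K) = @fone R K] /\
  [/\ order_continuous E F,
      strictly_positive E F
    & order_complete_sublattice (F @` E)].

Definition filtration (R : realType) (K : Type) (E : set (K -> \bar R))
  (F : nat -> (K -> \bar R) -> (K -> \bar R)) :=
  (forall i, cond_exp E (F i)) /\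
  (forall s t, (s <= t)%N -> forall f, E f ->
     F s f = F s (F t f) /\ F s f = F t (F s f)).

Definition mul_ind (R : realType) (K : Type) (W : set K) (f : K -> \bar R) :
  K -> \bar R := fun x => (\1_W x : R)%:E * f x.

Definition band_projection (R : realType) (K : topologicalType)
  (E : set (K -> \bar R)) (P : (K -> \bar R) -> (K -> \bar R)) :=
  exists2 W : set K, clopen W & forall f, E f -> P f = mul_ind W f.

Definition stopping_time (R : realType) (K : topologicalType)
  (E : set (K -> \bar R)) (F : nat -> (K -> \bar R) -> (K -> \bar R))
  (P : nat -> (K -> \bar R) -> (K -> \bar R)) :=
  [/\ (forall i, band_projection E (P i)),
      (forall i j, (i <= j)%N -> forall f, E f -> fle (@fzero R K) f ->
          fle (P i f) (P j f)),
      (forall f, E f -> P 0%N f = @fzero R K)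
    & (forall i j, (i <= j)%N -> forall f, E f -> F j (P i f) = P i (F j f))].

Definition sup_completion (R : realType) (K : topologicalType)
  (E : set (K -> \bar R)) : set (K -> \bar R) :=
  [set t | continuous t /\ exists2 g, E g & fle g t].

Definition nat_valued_time (R : realType) (K : Type) (tau : K -> \bar R) :=
  forall x, tau x = +oo \/ exists2 n : nat, (0 < n)%N & tau x = n%:R%:E.

Definition ind_fun (R : realType) (K : Type) (W : set K) : K -> \bar R :=
  fun x => (\1_W x : R)%:E.

(* Main.v *)
Require Import Defs.
From HB Require Import structures.
From mathcomp Require Import all_boot all_order all_algebra.
From mathcomp Require Import all_classical all_reals all_analysis.
From mathcomp Require Import lra.
Import Order.TTheory GRing.Theory Num.Theory.
Local Open Scope classical_set_scope.
Local Open Scope ring_scope.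
Local Open Scope ereal_scope.
Set Implicit Arguments. Unset Strict Implicit. Unset Printing Implicit Defensive.
Section Topo.
Variables (R : realType) (K : topologicalType).

Definition good (S : set K) := forall U : set K, open U -> U !=set0 ->
  exists2 V : set K, open V /\ V !=set0 & V `<=` U `&` S.

Lemma good_mono (A B : set K) : good A -> A `<=` B -> good B.
Proof.
move=> gA AB U oU U0; have [V [oV V0] VU] := gA U oU U0.
by exists V => // x /VU [Ux /AB Bx].
Qed.

Lemma goodI (A B : set K) : good A -> good B -> good (A `&` B).
Proof.
move=> gA gB U oU U0; have [V [oV V0] VU] := gA U oU U0.
have [W [oW W0] WV] := gB V oV V0.
exists W => // x /WV [/VU [Ux Ax] Bx]; split => //.
Qed.

Lemma good_nd (A : set K) : nowhere_dense A -> good (~` A).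
Proof.
move=> nA U oU [u Uu].
exists (U `&` ~` closure A).
  split; first by apply: openI => //; apply: closed_openC; exact: closed_closure.
  apply/set0P/negP => /eqP U0.
  have : U `<=` interior (closure A).
    rewrite -open_subsetE // => x Ux; apply: contrapT => cx.
    by have : (U `&` ~` closure A) x by []; rewrite U0.
  by rewrite nA => /(_ u Uu).
by move=> x [Ux cx]; split => // Ax; apply: cx; exact: subset_closure.
Qed.

Lemma nd_mono (A B : set K) : nowhere_dense B -> A `<=` B -> nowhere_dense A.
Proof.
rewrite /nowhere_dense => nB AB; apply/seteqP; split => // x.
by move=> /(interiorS (closureS AB)); rewrite nB.
Qed.

Lemma good_fin (f : K -> \bar R) : Cinf f -> good [set x | f x \is a fin_num].
Proof.
move=> [_ nf]; apply: good_mono (good_nd nf) _ => x /= nx.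
by apply: contrapT => /negP.
Qed.

Lemma goodT : good setT.
Proof. by move=> U oU [u Uu]; exists U => //; split => //; exists u. Qed.

Lemma ereal_mid (a b : \bar R) : a < b -> exists c : R, a < c%:E < b.
Proof.
case: a => [a||]; case: b => [b||] //=.
- rewrite lte_fin => ab; exists ((a + b) / 2)%R.
  by rewrite !lte_fin; apply/andP; split; [rewrite midf_lt|rewrite midf_lt].
- by move=> _; exists (a + 1)%R; rewrite !lte_fin ltrDl ltr01 ltry.
- by move=> _; exists (b - 1)%R; rewrite ltNye lte_fin gtrDl ltrN10.
- by move=> _; exists 0%R; rewrite ltNye ltry.
Qed.

Lemma ext_le (S : set K) (f g : K -> \bar R) : continuous f -> continuous g ->
  good S -> (forall x, S x -> f x <= g x) -> forall x, f x <= g x.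
Proof.
move=> cf cg gS fg x; rewrite leNgt; apply/negP => gf.
have [c /andP [gc cf']] := ereal_mid gf.
have oU : open (f @^-1` [set y | c%:E < y] `&` g @^-1` [set y | y < c%:E]).
  apply: openI.
  - by move/continuousP : cf; apply; exact: open_ereal_gt_ereal.
  - by move/continuousP : cg; apply; exact: open_ereal_lt_ereal.
have [V [_ [v Vv]] VU] := gS _ oU (ex_intro _ x (conj cf' gc)).
have [[/= h1 h2] Sv] := VU v Vv.
by have := fg v Sv; rewrite leNgt (lt_trans h2 h1).
Qed.

Lemma ext_eq (S : set K) (f g : K -> \bar R) : continuous f -> continuous g ->
  good S -> (forall x, S x -> f x = g x) -> f = g.
Proof.
move=> cf cg gS fg; apply/funext => x; apply/eqP; rewrite eq_le.
by rewrite (ext_le cf cg gS) ?(ext_le cg cf gS) // => y /fg ->.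
Qed.

End Topo.
Section CinfFacts.
Variables (R : realType) (K : topologicalType).
Implicit Types (f g : K -> \bar R) (W : set K).

Lemma mul_indE W f x : mul_ind W f x = if x \in W then f x else 0.
Proof. by rewrite /mul_ind indicE; case: (x \in W); rewrite ?mul1e ?mul0e. Qed.

Lemma ind_funE W x : @ind_fun R K W x = if x \in W then 1 else 0.
Proof. by rewrite /ind_fun indicE; case: (x \in W). Qed.

Lemma open_cstP (P : Prop) : open [set _ : K | P].
Proof.
have [p|np] := pselect P.
  suff -> : [set _ : K | P] = [set: K] by exact: openT.
  by apply/seteqP; split.
suff -> : [set _ : K | P] = @set0 K by exact: open0.
by apply/seteqP; split.
Qed.

Lemma mul_ind_cont W f : clopen W -> continuous f -> continuous (mul_ind W f).
Proof.
move=> [oW cW] cf; apply/continuousP => A oA.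
rewrite (_ : _ @^-1` A = (W `&` f @^-1` A) `|` (~` W `&` [set _ | A 0])).
  apply: openU; apply: openI => //.
  - by move/continuousP : cf; apply.
  - exact: closed_openC.
  - exact: open_cstP.
apply/seteqP; split => x /=; rewrite mul_indE.
  case: ifPn => [/set_mem xW Afx|xW A0]; [by left|right]; split => //.
  by move=> /mem_set; apply/negP.
move=> [[xW Afx]|[nxW A0]]; first by rewrite mem_set.
suff -> : (x \in W) = false by [].
by apply/negbTE/negP => /set_mem.
Qed.

Lemma Cinf_mul_ind W f : clopen W -> Cinf f -> Cinf (mul_ind W f).
Proof.
move=> cW [cf nf]; split; first exact: mul_ind_cont.
apply: (nd_mono nf) => x /=; rewrite mul_indE; by case: ifP.
Qed.

Lemma Cinf_cst (c : \bar R) : c \is a fin_num -> @Cinf R K (fun=> c).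
Proof.
move=> fc; split; first exact: cst_continuous.
rewrite /nowhere_dense (_ : [set _ | _] = set0) ?closure0 ?interior0 //.
by apply/seteqP; split => x //=; rewrite fc.
Qed.

Lemma Cinf_ind W : clopen W -> Cinf (@ind_fun R K W).
Proof.
move=> cW; have -> : @ind_fun R K W = mul_ind W (fun=> 1).
  by apply/funext => x; rewrite ind_funE mul_indE.
exact/Cinf_mul_ind/Cinf_cst.
Qed.

Lemma Cinf_min f (c : R) : Cinf f -> Cinf (fun x => mine (f x) c%:E).
Proof.
move=> [cf nf]; split.
  exact: (@min_fun_continuous _ K _ f (fun=> c%:E) cf (@cst_continuous _ _ _)).
apply: (nd_mono nf) => x /=; apply: contra => fx.
by rewrite /mine; case: ifP.
Qed.

Lemma Cinf_max f (c : R) : Cinf f -> Cinf (fun x => maxe (f x) c%:E).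
Proof.
move=> [cf nf]; split.
  exact: (@max_fun_continuous _ K _ f (fun=> c%:E) cf (@cst_continuous _ _ _)).
apply: (nd_mono nf) => x /=; apply: contra => fx.
by rewrite /maxe; case: ifP.
Qed.

End CinfFacts.
Lemma finE (R : realType) (x : \bar R) : x \is a fin_num -> x = (fine x)%:E.
Proof. by move=> fx; rewrite fineK. Qed.

Section Ideal.
Variables (R : realType) (K : topologicalType) (E : set (K -> \bar R)).
Hypothesis hE : order_dense_ideal E.
Implicit Types (f g h u v : K -> \bar R) (W : set K).

Lemma E_Cinf f : E f -> Cinf f.
Proof. by case: hE => + _ _ _ _; apply. Qed.

Lemma E_cont f : E f -> continuous f.
Proof. by move=> /E_Cinf []. Qed.

Lemma E_good f : E f -> good [set x | f x \is a fin_num].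
Proof. by move=> /E_Cinf/good_fin. Qed.

Lemma E_ideal f g : E f -> Cinf g -> (forall x, `|g x| <= `|f x|) -> E g.
Proof. by case: hE => _ _ + _ _; apply. Qed.

Lemma E_one : E (@fone R K).
Proof. by case: hE. Qed.

Lemma E_lc a b f g : E f -> E g -> exists2 h, E h & is_lincomb a f b g h.
Proof. by case: hE => _ + _ _ _; apply. Qed.

Lemma E0 : E (@fzero R K).
Proof.
apply: (E_ideal E_one); first exact: Cinf_cst.
by move=> x; rewrite /fzero /fone abse0 abse_ge0.
Qed.

Lemma E_ind W : clopen W -> E (@ind_fun R K W).
Proof.
move=> cW; apply: (E_ideal E_one); first exact: Cinf_ind.
by move=> x; rewrite ind_funE /fone; case: ifP; rewrite ?abse0 ?abse1.
Qed.

Lemma E_mul_ind W f : clopen W -> E f -> E (mul_ind W f).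
Proof.
move=> cW Ef; apply: (E_ideal Ef); first exact/Cinf_mul_ind/E_Cinf.
by move=> x; rewrite mul_indE; case: ifP; rewrite ?abse0 ?abse_ge0.
Qed.

Lemma E_min f (c : R) : E f -> (forall x, 0 <= f x) -> (0 <= c)%R ->
  E (fun x => mine (f x) c%:E).
Proof.
move=> Ef f0 c0; apply: (E_ideal Ef); first exact/Cinf_min/E_Cinf.
move=> x; rewrite !gee0_abs ?le_min ?f0 ?lee_fin //.
by rewrite ge_min lexx.
Qed.

Lemma E_max0 f : E f -> E (fun x => maxe (f x) 0).
Proof.
move=> Ef; apply: (E_ideal Ef); first by have := Cinf_max 0%R (E_Cinf Ef).
move=> x; rewrite gee0_abs ?le_max ?lexx ?orbT //.
by rewrite ge_max abse_ge0 andbT lee_abs.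
Qed.

Lemma E_lc_eq a b f g u (S : set K) : E f -> E g -> continuous u -> good S ->
  (forall x, S x -> u x = a%:E * f x + b%:E * g x) -> E u /\ is_lincomb a f b g u.
Proof.
move=> Ef Eg cu gS uS; have [h Eh hl] := E_lc a b Ef Eg.
suff hu : h = u by rewrite -hu.
apply: (ext_eq (E_cont Eh) cu (goodI (goodI gS (E_good Ef)) (E_good Eg))).
by move=> x [[Sx fx] gx]; rewrite uS // hl.
Qed.

End Ideal.
Section CondExp.
Variables (R : realType) (K : topologicalType) (E : set (K -> \bar R)).
Hypothesis hE : order_dense_ideal E.
Variable G : (K -> \bar R) -> (K -> \bar R).
Hypothesis hG : cond_exp E G.
Implicit Types (f g h u v : K -> \bar R) (W : set K).

Lemma GE f : E f -> E (G f).
Proof. by case: hG => -[+ _ _ _] _; apply. Qed.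

Lemma Glin a b f g h : E f -> E g -> E h -> is_lincomb a f b g h ->
  is_lincomb a (G f) b (G g) (G h).
Proof. by case: hG => -[_ + _ _] _; apply. Qed.

Lemma Gidem f : E f -> G (G f) = G f.
Proof. by case: hG => -[_ _ + _] _; apply. Qed.

Lemma G1 : G (@fone R K) = @fone R K.
Proof. by case: hG => -[]. Qed.

Lemma Gcont f : E f -> continuous (G f).
Proof. by move=> /GE /(E_cont hE). Qed.

Lemma Ggood f : E f -> good [set x | G f x \is a fin_num].
Proof. by move=> /GE /(E_good hE). Qed.

Lemma G0 : G (@fzero R K) = @fzero R K.
Proof.
have E0' := E0 hE.
have hl : is_lincomb 0%R (@fzero R K) 0%R (@fzero R K) (@fzero R K).
  by move=> x _ _; rewrite /fzero !mul0e adde0.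
have := Glin E0' E0' E0' hl => hl'.
apply: (ext_eq (Gcont E0') (@cst_continuous _ _ _) (Ggood E0')) => x fx.
by rewrite hl' // !mul0e adde0.
Qed.

Lemma Gpos f : E f -> fle (@fzero R K) f -> fle (@fzero R K) (G f).
Proof.
move=> Ef f0; have [->|nf0] := pselect (f = @fzero R K).
  by rewrite G0 => x.
by case: hG => _ [_ + _] => /(_ f Ef f0 nf0) [].
Qed.

Lemma G_le u v : E u -> E v -> (forall x, u x <= v x) -> forall x, G u x <= G v x.
Proof.
move=> Eu Ev uv; have [h Eh hl] := E_lc hE 1%R (-1)%R Ev Eu.
have h0 : fle (@fzero R K) h.
  apply: (ext_le (@cst_continuous _ _ _) (E_cont hE Eh) (goodI (E_good hE Ev) (E_good hE Eu))).
  move=> x [/= fv fu]; rewrite hl // /fzero (finE fv) (finE fu).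
  rewrite -!EFinM -EFinD lee_fin mul1r mulN1r subr_ge0 -lee_fin -(finE fv) -(finE fu).
  exact: uv.
have Gh := Gpos Eh h0; have Ghl := Glin Ev Eu Eh hl.
apply: (ext_le (Gcont Eu) (Gcont Ev) (goodI (Ggood Ev) (Ggood Eu))).
move=> x [/= fv fu]; have := Gh x; rewrite Ghl // /fzero (finE fv) (finE fu).
rewrite -!EFinM -EFinD !lee_fin mul1r mulN1r subr_ge0 //.
Qed.

End CondExp.
Section Avg.
Variables (R : realType) (K : topologicalType) (E : set (K -> \bar R)).
Hypothesis hE : order_dense_ideal E.
Variable G : (K -> \bar R) -> (K -> \bar R).
Hypothesis hG : cond_exp E G.
Implicit Types (f g h u v : K -> \bar R) (W V : set K).

Lemma vanish V (c : R) f : clopen V -> G (@ind_fun R K V) = @ind_fun R K V ->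
  E f -> (forall x, 0 <= f x) -> (forall x, f x <= c%:E) ->
  forall x, ~ V x -> G (mul_ind V f) x = 0.
Proof.
move=> cV hV Ef f0 fc.
have EV := E_ind hE cV.
have [Ecp hl] : E (mul_ind V (fun=> c%:E)) /\
    is_lincomb c (@ind_fun R K V) 0%R (@ind_fun R K V) (mul_ind V (fun=> c%:E)).
  apply: (E_lc_eq hE (S := setT) EV EV (mul_ind_cont cV (@cst_continuous _ _ _)) (@goodT K)).
  by move=> x _; rewrite mul_indE ind_funE; case: ifP => _;
    rewrite ?mule1 ?mule0 ?mul0e ?adde0.
have Gl := Glin hG EV EV Ecp hl; rewrite hV in Gl.
have Ea := E_mul_ind hE cV Ef.
move=> x nVx.
have nx : (x \in V) = false by apply/negbTE/negP => /set_mem.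
apply/eqP; rewrite eq_le; apply/andP; split; last first.
  by apply: (Gpos hE hG Ea) => y; rewrite /fzero mul_indE; case: ifP.
have le1 : forall y, mul_ind V f y <= mul_ind V (fun=> c%:E) y.
  by move=> y; rewrite !mul_indE; case: ifP.
by have := G_le hE hG Ea Ecp le1 x; rewrite Gl ?ind_funE ?nx ?mule0 ?adde0.
Qed.

Lemma indC W : clopen W -> G (@ind_fun R K W) = @ind_fun R K W ->
  G (@ind_fun R K (~` W)) = @ind_fun R K (~` W).
Proof.
move=> cW hW; have cWc := clopenC W cW.
have [EC hl] : E (@ind_fun R K (~` W)) /\
    is_lincomb 1%R (@fone R K) (-1)%R (@ind_fun R K W) (@ind_fun R K (~` W)).
  apply: (E_lc_eq hE (S := setT) (E_one hE) (E_ind hE cW) (E_cont hE (E_ind hE cWc)) (@goodT K)).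
  move=> x _; rewrite !ind_funE in_setC /fone; case: (x \in W) => /=;
  by rewrite ?(mule0, mul0e, mule1, mul1e, adde0, add0e) // -EFinD subrr.
have Gl := Glin hG (E_one hE) (E_ind hE cW) EC hl; rewrite (G1 hG) hW in Gl.
apply/funext => x; rewrite Gl ?ind_funE ?in_setC /fone //; last by case: ifP.
by case: (x \in W) => /=;
  rewrite ?(mule0, mul0e, mule1, mul1e, adde0, add0e) // -EFinD subrr.
Qed.

Lemma stepA W (c : R) f : clopen W -> G (@ind_fun R K W) = @ind_fun R K W ->
  E f -> (forall x, 0 <= f x) -> (forall x, f x <= c%:E) ->
  G (mul_ind W f) = mul_ind W (G f).
Proof.
move=> cW hW Ef f0 fc.
have hWc := indC cW hW; have cWc := clopenC W cW.
have Ea := E_mul_ind hE cW Ef; have Eb := E_mul_ind hE cWc Ef.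
have hl : is_lincomb 1%R (mul_ind W f) 1%R (mul_ind (~` W) f) f.
  by move=> x _ _; rewrite !mul_indE in_setC; case: (x \in W) => /=;
    rewrite ?(mule0, mul0e, mule1, mul1e, adde0, add0e).
have Gl := Glin hG Ea Eb Ef hl.
apply: (ext_eq (Gcont hE hG Ea) (mul_ind_cont cW (Gcont hE hG Ef))
  (goodI (Ggood hE hG Ea) (Ggood hE hG Eb))) => x [/= fa fb].
rewrite mul_indE; case: ifPn => xW.
  rewrite Gl // (vanish cWc hWc Ef f0 fc) ?mul1e ?adde0 //.
  by move=> /(_ (set_mem xW)).
by apply: (vanish cW hW Ef f0 fc) => /mem_set; apply/negP.
Qed.

End Avg.
Lemma fin_ex (R : realType) (x : \bar R) : x \is a fin_num -> exists r : R, x = r%:E.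
Proof. by move=> fx; exists (fine x); rewrite fineK. Qed.

Section StepB.
Variables (R : realType) (K : topologicalType) (E : set (K -> \bar R)).
Hypothesis hE : order_dense_ideal E.
Variable G : (K -> \bar R) -> (K -> \bar R).
Hypothesis hG : cond_exp E G.
Implicit Types (f g h u v : K -> \bar R) (W V : set K).

Lemma Gocont : order_continuous E G.
Proof. by case: hG => _ []. Qed.

Lemma min_fin (a : \bar R) (c : R) : 0 <= a -> mine a c%:E \is a fin_num.
Proof.
case: a => [r _|_|] //.
by rewrite -EFin_min.
Qed.

Lemma stepB W f : clopen W -> G (@ind_fun R K W) = @ind_fun R K W ->
  E f -> (forall x, 0 <= f x) -> G (mul_ind W f) = mul_ind W (G f).
Proof.
move=> cW hW Ef f0.
pose fn (n : nat) := fun x => mine (f x) (n%:R)%:E.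
have Efn n : E (fn n) by rewrite /fn; apply: (E_min hE Ef f0); rewrite ler0n.
have fn0 n x : 0 <= fn n x by rewrite /fn le_min f0 lee_fin ler0n.
have fnc n x : fn n x <= (n%:R)%:E by rewrite /fn ge_min lexx orbT.
have ffn n x : fn n x \is a fin_num by rewrite /fn; apply: min_fin.
have Hex n : exists h, E h /\ is_lincomb 1%R f (-1)%R (fn n) h.
  by have [h ? ?] := E_lc hE 1%R (-1)%R Ef (Efn n); exists h.
have [g Hg] := choice Hex.
have Eg n : E (g n) by case: (Hg n).
have gl n : is_lincomb 1%R f (-1)%R (fn n) (g n) by case: (Hg n).
have gf := E_good hE Ef.
have gval n x r : f x = r%:E -> g n x = (r - Num.min r n%:R)%:E.
  move=> fr; rewrite gl ?fr ?ffn // /fn fr -EFin_min -!EFinM -EFinD.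
  by rewrite mul1r mulN1r.
have g0 n : forall x, 0 <= g n x.
  apply: (ext_le (@cst_continuous _ _ _) (E_cont hE (Eg n)) gf) => x /= /fin_ex [r fr].
  by rewrite (gval n x r fr) lee_fin subr_ge0 ge_min lexx.
have gmono n m : (n <= m)%N -> forall x, g m x <= g n x.
  move=> nm; apply: (ext_le (E_cont hE (Eg m)) (E_cont hE (Eg n)) gf) => x /= /fin_ex [r fr].
  rewrite (gval n x r fr) (gval m x r fr) lee_fin lerD2l lerN2.
  by apply: le_min2 => //; rewrite ler_nat.
have ginf h : E h -> (forall n x, h x <= g n x) -> forall x, h x <= 0.
  move=> Eh hg; apply: (ext_le (E_cont hE Eh) (@cst_continuous _ _ _) (goodI gf (E_good hE Eh))).
  move=> x [/= /fin_ex [r fr] _].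
  have r0 : (0 <= r)%R by rewrite -lee_fin -fr.
  have := hg (Num.Def.trunc r).+1 x; rewrite (gval _ x r fr).
  rewrite min_l ?subrr //; apply/ltW/real_truncnS_gt; exact: num_real.
pose D := range g.
have DE : D `<=` E by move=> _ [n _ <-].
have D0 : D !=set0 by exists (g 0%N), 0%N.
have Ddir : forall d1 d2, D d1 -> D d2 -> exists2 d3, D d3 & fle d3 d1 /\ fle d3 d2.
  move=> _ _ [n _ <-] [m _ <-]; exists (g (maxn n m)); first by exists (maxn n m).
  by split; apply: gmono; rewrite ?leq_maxl ?leq_maxr.
have Dinf : is_inf E D (@fzero R K).
  split; first exact: (E0 hE).
    by move=> _ [n _ <-] x; exact: g0.
  by move=> h Eh hD x; apply: (ginf h Eh) => n y; apply: hD; exists n.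
have [_ _ GDinf] := Gocont DE D0 Ddir Dinf.
have Ewf := E_mul_ind hE cW Ef.
have EWGf := E_mul_ind hE cW (GE hG Ef).
have EGwf := GE hG Ewf.
have [d Ed dl] := E_lc hE 1%R (-1)%R EWGf EGwf.
have [nd End ndl] := E_lc hE (-1)%R 0%R Ed Ed.
have key n : (forall x, d x <= G (g n) x) /\ (forall x, nd x <= G (g n) x).
  have Ewfn := E_mul_ind hE cW (Efn n).
  have Ewg := E_mul_ind hE cW (Eg n).
  have r1 := Glin hG Ef (Efn n) (Eg n) (gl n).
  have wl : is_lincomb 1%R (mul_ind W f) (-1)%R (mul_ind W (fn n)) (mul_ind W (g n)).
    move=> x; rewrite !mul_indE; case: ifP => _; last first.
      by rewrite ?(mule0, mul0e, mule1, mul1e, adde0, add0e).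
    by move=> fx _; rewrite gl.
  have r2 := Glin hG Ewf Ewfn Ewg wl.
  have r3 := stepA hE hG cW hW (Efn n) (fn0 n) (fnc n).
  have p1 := Gpos hE hG (Eg n) (g0 n).
  have wg0 : fle (@fzero R K) (mul_ind W (g n)).
    by move=> x; rewrite mul_indE; case: ifP => // _; exact: g0.
  have p2 := Gpos hE hG Ewg wg0.
  have p3 : forall x, G (mul_ind W (g n)) x <= G (g n) x.
    apply: (G_le hE hG Ewg (Eg n)) => x; rewrite mul_indE.
    by case: ifP => // _; exact: g0.
  have S := goodI (goodI (goodI (Ggood hE hG Ef) (Ggood hE hG (Efn n)))
              (goodI (Ggood hE hG Ewf) (Ggood hE hG Ewg)))
              (goodI (Ggood hE hG (Eg n)) (E_good hE Ed)).
  have gen : forall x, [set x | G f x \is a fin_num] x ->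
      [set x | G (fn n) x \is a fin_num] x ->
      [set x | G (mul_ind W f) x \is a fin_num] x ->
      [set x | G (mul_ind W (g n)) x \is a fin_num] x ->
      [set x | G (g n) x \is a fin_num] x ->
      [set x | d x \is a fin_num] x ->
      d x <= G (g n) x /\ nd x <= G (g n) x.
    move=> x /= /fin_ex [a ea] /fin_ex [b eb] /fin_ex [c ec] /fin_ex [e ee]
      /fin_ex [k ek] /fin_ex [l el].
    have hp1 := p1 x; have hp2 := p2 x; have hp3 := p3 x.
    rewrite /fzero ek ee in hp1 hp2 hp3; rewrite !lee_fin in hp1 hp2 hp3.
    have h1 := r1 x; rewrite ea eb ek in h1.
    have {}h1 : k = (a - b)%R.
      by apply/EFin_inj; rewrite h1 // -!EFinM -EFinD mul1r mulN1r.
    have fwfn : G (mul_ind W (fn n)) x = mul_ind W (G (fn n)) x by rewrite r3.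
    rewrite mul_indE eb in fwfn.
    have h2 := r2 x; rewrite ee ec fwfn in h2.
    have hd := dl x; rewrite el ec mul_indE ea in hd.
    have hnd := ndl x; rewrite el in hnd.
    rewrite ek el hnd //.
    move: h2 hd; case: ifP => _.
      move=> h2 hd; have {}h2 : e = (c - b)%R.
        by apply/EFin_inj; rewrite h2 // -!EFinM -EFinD mul1r mulN1r.
      have {}hd : l = (a - c)%R.
        by apply/EFin_inj; rewrite hd // -!EFinM -EFinD mul1r mulN1r.
      rewrite -!EFinM -EFinD !lee_fin; split; lra.
    move=> h2 hd; have {}h2 : e = (c - 0)%R.
      by apply/EFin_inj; rewrite h2 // -!EFinM -EFinD mul1r mulN1r.
    have {}hd : l = (0 - c)%R.
      by apply/EFin_inj; rewrite hd // -!EFinM -EFinD mul1r mulN1r.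
    rewrite -!EFinM -EFinD !lee_fin; split; lra.
  split.
    apply: (ext_le (E_cont hE Ed) (Gcont hE hG (Eg n)) S).
    by move=> x [[[? ?] [? ?]] [? ?]]; case: (gen x).
  apply: (ext_le (E_cont hE End) (Gcont hE hG (Eg n)) S).
  by move=> x [[[? ?] [? ?]] [? ?]]; case: (gen x).
have dle : forall x, d x <= 0.
  apply: (GDinf d Ed) => _ [_ [n _ <-] <-]; exact: (key n).1.
have ndle : forall x, nd x <= 0.
  apply: (GDinf nd End) => _ [_ [n _ <-] <-]; exact: (key n).2.
apply: (ext_eq (Gcont hE hG Ewf) (E_cont hE EWGf)
  (goodI (goodI (E_good hE Ed) (Ggood hE hG Ewf)) (E_good hE EWGf))).
move=> x [[/= /fin_ex [l el] /fin_ex [c ec]] /fin_ex [a ea]].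
have h1 := dle x; have h2 := ndle x.
rewrite (ndl x) el // in h2.
have hd := dl x; rewrite el ec ea in hd.
have {}hd : l = (a - c)%R.
  by apply/EFin_inj; rewrite hd // -!EFinM -EFinD mul1r mulN1r.
rewrite el in h1; rewrite ec ea; congr EFin.
move: h1 h2; rewrite -!EFinM -EFinD !lee_fin => h1 h2; lra.
Qed.

End StepB.
Lemma maxr_diff (R : realType) (r : R) : (Num.max r 0 - Num.max (- r) 0 = r)%R.
Proof.
have [r0|r0] := leP 0%R r; have [s0|s0] := leP 0%R (- r)%R; lra.
Qed.

Section AvgGen.
Variables (R : realType) (K : topologicalType) (E : set (K -> \bar R)).
Hypothesis hE : order_dense_ideal E.
Variable G : (K -> \bar R) -> (K -> \bar R).
Hypothesis hG : cond_exp E G.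
Implicit Types (f g h u v : K -> \bar R) (W V : set K).

Lemma avg W f : clopen W -> G (@ind_fun R K W) = @ind_fun R K W ->
  E f -> G (mul_ind W f) = mul_ind W (G f).
Proof.
move=> cW hW Ef.
pose fp := fun x => maxe (f x) 0%:E.
have Efp : E fp := E_max0 hE Ef.
have [h Eh hl] := E_lc hE (-1)%R 0%R Ef Ef.
pose fm := fun x => maxe (h x) 0%:E.
have Efm : E fm := E_max0 hE Eh.
have fp0 x : 0 <= fp x by rewrite /fp le_max lexx orbT.
have fm0 x : 0 <= fm x by rewrite /fm le_max lexx orbT.
have [k Ek kl] := E_lc hE 1%R (-1)%R Efp Efm.
have kf : k = f.
  apply: (ext_eq (E_cont hE Ek) (E_cont hE Ef) (goodI (E_good hE Ef) (E_good hE Eh))).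
  move=> x [/= /fin_ex [r fr] /fin_ex [s hs]].
  have hs' := hl x; rewrite fr hs in hs'.
  have {}hs' : s = (- r)%R.
    by apply/EFin_inj; rewrite hs' // -!EFinM -EFinD mul0r addr0 mulN1r.
  rewrite kl /fp /fm ?fr ?hs ?hs' -?EFin_max //.
  by rewrite -!EFinM -EFinD mul1r mulN1r maxr_diff.
rewrite kf in kl.
have Gl := Glin hG Efp Efm Ef kl.
have Wfp := stepB hE hG cW hW Efp fp0.
have Wfm := stepB hE hG cW hW Efm fm0.
have wl : is_lincomb 1%R (mul_ind W fp) (-1)%R (mul_ind W fm) (mul_ind W f).
  move=> x; rewrite !mul_indE; case: ifP => _; last first.
    by rewrite ?(mule0, mul0e, mule1, mul1e, adde0, add0e).
  by move=> ? ?; rewrite kl.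
have Gwl := Glin hG (E_mul_ind hE cW Efp) (E_mul_ind hE cW Efm) (E_mul_ind hE cW Ef) wl.
rewrite Wfp Wfm in Gwl.
apply: (ext_eq (Gcont hE hG (E_mul_ind hE cW Ef)) (mul_ind_cont cW (Gcont hE hG Ef))
  (goodI (Ggood hE hG Efp) (Ggood hE hG Efm))) => x [/= fa fb].
rewrite Gwl ?mul_indE; try by case: ifP.
case: ifP => _; first by rewrite Gl.
by rewrite ?(mule0, mul0e, mule1, mul1e, adde0, add0e).
Qed.

End AvgGen.
Lemma ind_funT (R : realType) (K : topologicalType) (W : set K) x :
  W x -> @ind_fun R K W x = 1.
Proof. by move=> Wx; rewrite ind_funE mem_set. Qed.

Lemma ind_funF (R : realType) (K : topologicalType) (W : set K) x :
  ~ W x -> @ind_fun R K W x = 0.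
Proof.
by move=> Wx; rewrite ind_funE; case: ifP => // /set_mem.
Qed.

Lemma mul_indT (R : realType) (K : topologicalType) (W : set K) (f : K -> \bar R) x :
  W x -> mul_ind W f x = f x.
Proof. by move=> Wx; rewrite mul_indE mem_set. Qed.

Lemma mul_indF (R : realType) (K : topologicalType) (W : set K) (f : K -> \bar R) x :
  ~ W x -> mul_ind W f x = 0.
Proof. by move=> Wx; rewrite mul_indE; case: ifP => // /set_mem. Qed.

Lemma clopen_le (R : realType) (K : topologicalType) (tau : K -> \bar R) (n : nat) :
  continuous tau -> nat_valued_time tau -> clopen [set x | tau x <= n%:R%:E].
Proof.
move=> ct nt; split.
  rewrite (_ : [set x | _] = tau @^-1` [set y | y < (n.+1%:R)%:E]).
    by move/continuousP : ct; apply; exact: open_ereal_lt_ereal.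
  apply/seteqP; split => x /=; case: (nt x) => [->|[m _ ->]] //;
  by rewrite !lee_fin !lte_fin ?ler_nat ?ltr_nat ltnS.
rewrite -openC (_ : ~` _ = tau @^-1` [set y | n%:R%:E < y]).
  by move/continuousP : ct; apply; exact: open_ereal_gt_ereal.
by apply/seteqP; split => x /=; rewrite ltNge => /negP.
Qed.

Section Part2.
Variables (R : realType) (K : topologicalType) (E : set (K -> \bar R))
  (F : nat -> (K -> \bar R) -> (K -> \bar R)).
Hypotheses (hE : order_dense_ideal E) (hF : filtration E F).
Variable tau : K -> \bar R.
Hypotheses (htau : sup_completion E tau) (nt : nat_valued_time tau)
  (hn : forall n : nat, (1 <= n)%N ->
        (F n @` E) (@ind_fun R K [set x | tau x = n%:R%:E])).

Let Wn (n : nat) := [set x | tau x <= n%:R%:E].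
Let ct : continuous tau. Proof. by case: htau. Qed.
Let cWn n : clopen (Wn n). Proof. exact: clopen_le. Qed.
Let hFi i : cond_exp E (F i). Proof. by case: hF. Qed.

Lemma Wn_ind i j : (i <= j)%N -> F j (@ind_fun R K (Wn i)) = @ind_fun R K (Wn i).
Proof.
elim: i => [|i IH] ij.
  have -> : @ind_fun R K (Wn 0) = @fzero R K.
    apply/funext => x; apply: ind_funF; rewrite /Wn /=.
    by case: (nt x) => [->|[m m0 ->]] //; rewrite lee_fin ler_nat leqn0 => /eqP m00; rewrite m00 in m0.
  exact: (G0 hE (hFi j)).
have {}IH := IH (ltnW ij).
have [g Eg hg] := hn (ltn0Sn i).
have Eeq : E (@ind_fun R K [set x | tau x = i.+1%:R%:E]) by rewrite -hg; exact: (GE (hFi _) Eg).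
have Feq : F j (@ind_fun R K [set x | tau x = i.+1%:R%:E]) =
           @ind_fun R K [set x | tau x = i.+1%:R%:E].
  by rewrite -hg; have [_ <-] := hF.2 _ _ ij g Eg.
have vals x : @ind_fun R K (Wn i.+1) x =
   1%:E * @ind_fun R K (Wn i) x + 1%:E * @ind_fun R K [set x | tau x = i.+1%:R%:E] x.
  rewrite /Wn; case: (nt x) => [tx|[m m0 tx]].
    have h1 : ~ [set x | tau x <= (i.+1)%:R%:E] x by rewrite /= tx leye_eq.
    have h2 : ~ [set x | tau x <= i%:R%:E] x by rewrite /= tx leye_eq.
    have h3 : ~ [set x | tau x = i.+1%:R%:E] x by rewrite /= tx.
    by rewrite (@ind_funF R _ _ _ h1) (@ind_funF R _ _ _ h2) (@ind_funF R _ _ _ h3) ?(mule0, adde0).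
  have eqm k : (m%:R%:E = k%:R%:E :> \bar R) <-> m = k.
    split=> [|->] //; move=> [] /eqP; rewrite eqr_nat; exact/eqP.
  have [mi|mi] := leqP m i.
    have h1 : [set x | tau x <= (i.+1)%:R%:E] x by rewrite /= tx lee_fin ler_nat (leqW mi).
    have h2 : [set x | tau x <= i%:R%:E] x by rewrite /= tx lee_fin ler_nat mi.
    have h3 : ~ [set x | tau x = i.+1%:R%:E] x.
      by rewrite /= tx eqm => mE; move: mi; rewrite mE ltnn.
    by rewrite (@ind_funT R _ _ _ h1) (@ind_funT R _ _ _ h2) (@ind_funF R _ _ _ h3) ?(mule0, adde0, mul1e).
  have [mE|mne] := eqVneq m i.+1.
    have h1 : [set x | tau x <= (i.+1)%:R%:E] x by rewrite /= tx mE.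
    have h2 : ~ [set x | tau x <= i%:R%:E] x by rewrite /= tx mE lee_fin ler_nat ltnn.
    have h3 : [set x | tau x = i.+1%:R%:E] x by rewrite /= tx mE.
    by rewrite (@ind_funT R _ _ _ h1) (@ind_funF R _ _ _ h2) (@ind_funT R _ _ _ h3) ?(mule0, add0e, mul1e).
  have mi' : (i.+1 < m)%N by rewrite ltn_neqAle eq_sym mne mi.
  have h1 : ~ [set x | tau x <= (i.+1)%:R%:E] x.
    by rewrite /= tx lee_fin ler_nat leqNgt mi'.
  have h2 : ~ [set x | tau x <= i%:R%:E] x.
    by rewrite /= tx lee_fin ler_nat leqNgt (ltnW mi').
  have h3 : ~ [set x | tau x = i.+1%:R%:E] x by rewrite /= tx eqm => /eqP; rewrite (negbTE mne).
  by rewrite (@ind_funF R _ _ _ h1) (@ind_funF R _ _ _ h2) (@ind_funF R _ _ _ h3) ?(mule0, adde0).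
have [EW hl] := E_lc_eq hE (S := setT) (E_ind hE (cWn i)) Eeq
  (E_cont hE (E_ind hE (cWn i.+1))) (@goodT K) (fun x _ => vals x).
have Gl := Glin (hFi j) (E_ind hE (cWn i)) Eeq EW hl.
rewrite IH Feq in Gl.
apply/funext => x; rewrite Gl ?vals //; rewrite ind_funE; by case: ifP.
Qed.

Lemma part2 : stopping_time E F
       (fun n f => if n is 0%N then @fzero R K
                   else mul_ind [set x | tau x <= n%:R%:E] f).
Proof.
split.
- case=> [|n].
    exists set0; first exact: clopen0.
    by move=> f _; apply/funext => x; rewrite mul_indF.
  by exists (Wn n.+1) => //; exact: cWn.
- move=> [|i] [|j] //= ij f Ef f0 x.
    by [].
    by rewrite mul_indE; case: ifP => // _; exact: f0.
  rewrite !mul_indE; case: ifPn => [/set_mem xi|_]; last by case: ifP => // _; exact: f0.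
  rewrite mem_set //; apply: (le_trans xi); rewrite lee_fin ler_nat; exact: ij.
- by [].
- move=> [|i] j ij f Ef /=; first exact: (G0 hE (hFi j)).
  by apply: (avg hE (hFi j) (cWn i.+1)) => //; exact: Wn_ind.
Qed.

End Part2.
Section FirstTime.
Variables (R : realType) (K : topologicalType) (W : nat -> set K).
Hypothesis Wmono : forall i j, (i <= j)%N -> W i `<=` W j.
Hypothesis W0 : forall x, ~ W 0%N x.

Definition first_time (x : K) : \bar R :=
  match pselect (exists n, `[< W n x >]) with
  | left h => (ex_minn h)%:R%:E
  | right _ => +oo
  end.

Lemma ft_le n x : first_time x <= n%:R%:E <-> W n x.
Proof.
rewrite /first_time; case: pselect => [h|nh].
  case: ex_minnP => m /asboolP Wm minm; rewrite lee_fin ler_nat; split.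
    by move=> mn; apply: Wmono mn _ Wm.
  by move=> Wn; apply: minm; apply/asboolP.
split; first by rewrite leye_eq.
by move=> Wn; exfalso; apply: nh; exists n; apply/asboolP.
Qed.

Lemma ft_nat : nat_valued_time first_time.
Proof.
move=> x; rewrite /first_time; case: pselect => [h|nh]; last by left.
right; case: ex_minnP => m /asboolP Wm _; exists m => //.
by rewrite lt0n; apply/eqP => m0; apply: (W0 (x := x)); rewrite -m0.
Qed.

Lemma ft_eq n x : (1 <= n)%N -> first_time x = n%:R%:E <-> W n x /\ ~ W n.-1 x.
Proof.
move=> n1; split.
  move=> e; split; first by apply/ft_le; rewrite e.
  by move/ft_le; rewrite e lee_fin ler_nat; case: n n1 {e} => //= n _; rewrite ltnn.
move=> [Wn nWn]; case: (ft_nat x) => [e|[m m0 e]].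
  by have := proj2 (ft_le n x) Wn; rewrite e leye_eq.
have := proj2 (ft_le n x) Wn; rewrite e lee_fin ler_nat => mn.
have : ~ (m <= n.-1)%N by move=> mn1; apply: nWn; apply/ft_le; rewrite e lee_fin ler_nat.
move=> nm; congr EFin; congr GRing.natmul; apply/eqP; rewrite eqn_leq mn /=.
by case: n n1 {Wn nWn mn} nm => //= n _ nm; rewrite ltnNge; apply/negP.
Qed.

Lemma ft_cont : (forall n, clopen (W n)) -> continuous first_time.
Proof.
move=> cW x A /= nA.
suff Hs : nbhs x (first_time @^-1` A) by exact: Hs.
case: (ft_nat x) => [e|[m m0 e]].
  rewrite e in nA; case: nA => M [_ hM].
  pose n := (Num.Def.trunc M).+1.
  have Mn : (M < n%:R)%R by apply: real_truncnS_gt; exact: num_real.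
  have oU : open (~` W n) by apply: closed_openC; case: (cW n).
  apply: (filterS (P := ~` W n)); last first.
    apply: open_nbhs_nbhs; split => //= Wn.
    by have := proj2 (ft_le n x) Wn; rewrite e leye_eq.
  move=> y /= nWy; apply: hM; rewrite (lt_le_trans (y := n%:R%:E)) ?lte_fin //.
  by rewrite leNgt; apply/negP => /ltW /ft_le.
have Ax : A (first_time x) by apply: nbhs_singleton.
apply: (filterS (P := W m `&` ~` W m.-1)); last first.
  apply: open_nbhs_nbhs; split.
    apply: openI; first by case: (cW m).
    by apply: closed_openC; case: (cW m.-1).
  by apply/ft_eq.
by move=> y /= /(ft_eq _ m0); rewrite -e => ->.
Qed.

End FirstTime.
Section Part1.
Variables (R : realType) (K : topologicalType) (E : set (K -> \bar R))
  (F : nat -> (K -> \bar R) -> (K -> \bar R)).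
Hypotheses (hE : order_dense_ideal E) (hF : filtration E F).
Variable P : nat -> (K -> \bar R) -> (K -> \bar R).
Hypothesis hP : stopping_time E F P.

Let hFi i : cond_exp E (F i). Proof. by case: hF. Qed.

Lemma part1 : exists2 tau, sup_completion E tau &
       [/\ nat_valued_time tau,
           (forall n : nat, (1 <= n)%N ->
              clopen [set x | tau x = n%:R%:E] /\
              (F n @` E) (@ind_fun R K [set x | tau x = n%:R%:E]))
         & (forall (n : nat) f, E f ->
              P n f = mul_ind [set x | tau x <= n%:R%:E] f)].
Proof.
case: hP => hband hmono hP0 hcomm.
have hex n : exists W : set K, clopen W /\ forall f, E f -> P n f = mul_ind W f.
  by have [W ? ?] := hband n; exists W.
have [W hW] := choice hex.
have cW n : clopen (W n) by case: (hW n).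
have PW n f : E f -> P n f = mul_ind (W n) f by case: (hW n) => _; apply.
have E1 := E_one hE.
have PW1 n : P n (@fone R K) = @ind_fun R K (W n).
  by rewrite PW //; apply/funext => x; rewrite mul_indE ind_funE /fone; case: ifP.
have W0 x : ~ W 0%N x.
  move=> Wx; have := congr1 (fun g => g x) (hP0 _ E1); rewrite PW1 (@ind_funT R _ _ _ Wx).
  by rewrite /fzero => -[] /eqP; rewrite oner_eq0.
have Wmono i j : (i <= j)%N -> W i `<=` W j.
  move=> ij x Wx; apply: contrapT => nWx.
  have f01 : fle (@fzero R K) (@fone R K) by move=> y; rewrite /fzero /fone lee_fin ler01.
  have := hmono i j ij _ E1 f01 x.
  by rewrite !PW1 (@ind_funT R _ _ _ Wx) (@ind_funF R _ _ _ nWx) lee_fin ler10.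
pose tau := @first_time R K W.
have tle n x : tau x <= n%:R%:E <-> W n x by apply: ft_le.
have teq n x : (1 <= n)%N -> tau x = n%:R%:E <-> W n x /\ ~ W n.-1 x.
  by move=> n1; apply: ft_eq.
have tnat : nat_valued_time tau by apply: ft_nat.
have tcont : continuous tau by apply: ft_cont.
have hWn n : F n (@ind_fun R K (W n)) = @ind_fun R K (W n).
  by rewrite -PW1 hcomm // (G1 (hFi n)).
exists tau.
  split => //; exists (@fzero R K); first exact: (E0 hE).
  by move=> x; case: (tnat x) => [->|[m _ ->]]; rewrite ?leey // /fzero lee_fin ler0n.
split => //.
- move=> n n1.
  have seteq : [set x | tau x = n%:R%:E] = W n `&` ~` W n.-1.
    by apply/seteqP; split => x /=; rewrite (teq n x n1).
  have cT : clopen [set x | tau x = n%:R%:E].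
    by rewrite seteq; apply: clopenI; [exact: cW | exact: (clopenC (W n.-1) (cW n.-1))].
  split => //.
  have hWk : F n (@ind_fun R K (W n.-1)) = @ind_fun R K (W n.-1).
    have k_n : (n.-1 <= n)%N by exact: leq_pred.
    rewrite -{1}(hWn n.-1).
    by have [_ <-] := hF.2 _ _ k_n _ (E_ind hE (cW n.-1)).
  have vals x : @ind_fun R K [set x | tau x = n%:R%:E] x =
      1%:E * @ind_fun R K (W n) x + (-1)%:E * @ind_fun R K (W n.-1) x.
    rewrite seteq; have [Wk|nWk] := pselect (W n.-1 x).
      have Wn : W n x by apply: Wmono Wk; exact: leq_pred.
      rewrite (@ind_funF R _ (W n `&` ~` W n.-1) x); last by case.
      rewrite (@ind_funT R _ (W n) x Wn) (@ind_funT R _ (W n.-1) x Wk).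
      by rewrite ?(mule0, adde0, mul1e) -EFinD mulN1r subrr.
    have [Wn|nWn] := pselect (W n x).
      rewrite (@ind_funT R _ (W n `&` ~` W n.-1) x) //.
      rewrite (@ind_funT R _ (W n) x Wn) (@ind_funF R _ (W n.-1) x nWk).
      by rewrite ?(mule0, adde0, mul1e).
    rewrite (@ind_funF R _ (W n `&` ~` W n.-1) x); last by case.
    rewrite (@ind_funF R _ (W n) x nWn) (@ind_funF R _ (W n.-1) x nWk).
    by rewrite ?(mule0, adde0, mul1e).
  have Eu := E_ind hE cT.
  have hl : is_lincomb 1%R (@ind_fun R K (W n)) (-1)%R (@ind_fun R K (W n.-1))
      (@ind_fun R K [set x | tau x = n%:R%:E]) by move=> x _ _; exact: vals.
  have Gl := Glin (hFi n) (E_ind hE (cW n)) (E_ind hE (cW n.-1)) Eu hl.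
  rewrite hWn hWk in Gl.
  exists (@ind_fun R K [set x | tau x = n%:R%:E]) => //.
  by apply/funext => x; rewrite Gl ?vals // ind_funE; case: ifP.
- move=> n f Ef; rewrite PW //.
  have -> : [set x | tau x <= n%:R%:E] = W n.
    by apply/seteqP; split => x /=; rewrite tle.
  by [].
Qed.
End Part1.

Theorem mainTheorem12 (R : realType) (K : topologicalType)
  (E : set (K -> \bar R)) (F : nat -> (K -> \bar R) -> (K -> \bar R)) :
  stone_space K -> order_dense_ideal E -> filtration E F ->
  (forall P : nat -> (K -> \bar R) -> (K -> \bar R),
     stopping_time E F P ->
     exists2 tau, sup_completion E tau &
       [/\ nat_valued_time tau,
           (forall n : nat, (1 <= n)%N ->
              clopen [set x | tau x = n%:R%:E] /\
              (F n @` E) (@ind_fun R K [set x | tau x = n%:R%:E]))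
         & (forall (n : nat) f, E f ->
              P n f = mul_ind [set x | tau x <= n%:R%:E] f)])
  /\
  (forall tau : K -> \bar R,
     sup_completion E tau -> nat_valued_time tau ->
     (forall n : nat, (1 <= n)%N ->
        (F n @` E) (@ind_fun R K [set x | tau x = n%:R%:E])) ->
     stopping_time E F
       (fun n f => if n is 0%N then @fzero R K
                   else mul_ind [set x | tau x <= n%:R%:E] f)).
Proof.
move=> _ hE hF; split.
  by move=> P hP; exact: (part1 hE hF hP).
by move=> tau ht nt hn; exact: (part2 hE hF ht nt hn).
Qed.
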